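(* Let $H\ge1$, $c_a\ge0$, $c_R\ge0$, and for $h=1,\dots,H$ let $p_{h,0},p_{h,1}\in[0,1]$ with $p_{h,0}\ge p_{h,1}$. Define $V_{H+1}=0$ and, for $h=H,\dots,1$, $V_h=\min\{c_a+p_{h,1}c_R+(1-p_{h,1})V_{h+1},\ p_{h,0}c_R+(1-p_{h,0})V_{h+1}\}$. Then for all $1\le h\le H$, $$\Big(1-\prod_{i=h}^H(1-p_{i,1})\Big)c_R\le V_h\le\Big(1-\prod_{i=h}^H(1-p_{i,0})\Big)c_R.$$ *)

(* Defs.v *)
From Stdlib Require Import Reals Lra Lia.
Open Scope R_scope.

(* Value recursion: V_{H+1} = 0,
   V_h = min (ca + p1 h * cR + (1 - p1 h) V_{h+1}) (p0 h * cR + (1 - p0 h) V_{h+1}).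
   Vaux k computes V_{H+1-k}. *)
Fixpoint Vaux (H : nat) (ca cR : R) (p0 p1 : nat -> R) (k : nat) : R :=
  match k with
  | O => 0
  | S k' =>
      let h := (H - k')%nat in
      let v := Vaux H ca cR p0 p1 k' in
      Rmin (ca + p1 h * cR + (1 - p1 h) * v) (p0 h * cR + (1 - p0 h) * v)
  end.

Definition V (H : nat) (ca cR : R) (p0 p1 : nat -> R) (h : nat) : R :=
  Vaux H ca cR p0 p1 (H + 1 - h).

Fixpoint prod_from (f : nat -> R) (h : nat) (n : nat) : R :=
  match n with
  | O => 1
  | S n' => f h * prod_from f (S h) n'
  end.

Definition prodR (f : nat -> R) (h H : nat) : R := prod_from f h (H + 1 - h).

(* Main.v *)
Require Import Defs.
From Stdlib Require Import Reals Lra Lia Psatz.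
Open Scope R_scope.

Lemma prod_from_01 (f : nat -> R) (n h : nat) :
  (forall i, (h <= i < h + n)%nat -> 0 <= f i <= 1) -> 0 <= prod_from f h n <= 1.
Proof.
  revert h; induction n as [|n IH]; intros h Hf; simpl; [lra|].
  assert (A := Hf h ltac:(lia)).
  assert (B := IH (S h) ltac:(intros i Hi; apply Hf; lia)).
  split; nra.
Qed.

Lemma key (H : nat) (ca cR : R) (p0 p1 : nat -> R) :
  0 <= ca -> 0 <= cR ->
  (forall h, (1 <= h <= H)%nat ->
     0 <= p0 h <= 1 /\ 0 <= p1 h <= 1 /\ p1 h <= p0 h) ->
  forall k, (k <= H)%nat ->
    (1 - prod_from (fun i => 1 - p1 i) (H + 1 - k) k) * cR <= Vaux H ca cR p0 p1 k /\
    Vaux H ca cR p0 p1 k <= (1 - prod_from (fun i => 1 - p0 i) (H + 1 - k) k) * cR.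
Proof.
  intros Hca HcR Hp k; induction k as [|k IH]; intros Hk.
  - simpl; lra.
  - destruct (IH ltac:(lia)) as [L U].
    replace (H + 1 - S k)%nat with (H - k)%nat by lia.
    simpl.
    replace (S (H - k)) with (H + 1 - k)%nat by lia.
    destruct (Hp (H - k)%nat ltac:(lia)) as [[a0 b0] [[a1 b1] c]].
    assert (P1 := prod_from_01 (fun i => 1 - p1 i) k (H + 1 - k)
      ltac:(intros i Hi; destruct (Hp i ltac:(lia)) as [? [? ?]]; lra)).
    assert (P0 := prod_from_01 (fun i => 1 - p0 i) k (H + 1 - k)
      ltac:(intros i Hi; destruct (Hp i ltac:(lia)) as [? [? ?]]; lra)).
    set (Q1 := prod_from (fun i => 1 - p1 i) (H + 1 - k) k) in *.
    set (Q0 := prod_from (fun i => 1 - p0 i) (H + 1 - k) k) in *.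
    set (v := Vaux H ca cR p0 p1 k) in *.
    set (q0 := p0 (H - k)%nat) in *.
    set (q1 := p1 (H - k)%nat) in *.
    split.
    + apply Rmin_glb.
      * assert (0 <= 1 - q1) by lra. nra.
      * assert (0 <= 1 - q0) by lra.
        assert ((1 - q0) * ((1 - Q1) * cR) <= (1 - q0) * v) by nra.
        assert (0 <= Q1 * cR) by nra.
        nra.
    + eapply Rle_trans; [apply Rmin_r|].
      assert (0 <= 1 - q0) by lra. nra.
Qed.

Theorem mainTheorem4 (H : nat) (ca cR : R) (p0 p1 : nat -> R) :
  (1 <= H)%nat -> 0 <= ca -> 0 <= cR ->
  (forall h, (1 <= h <= H)%nat ->
     0 <= p0 h <= 1 /\ 0 <= p1 h <= 1 /\ p1 h <= p0 h) ->
  forall h, (1 <= h <= H)%nat ->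
    (1 - prodR (fun i => 1 - p1 i) h H) * cR <= V H ca cR p0 p1 h /\
    V H ca cR p0 p1 h <= (1 - prodR (fun i => 1 - p0 i) h H) * cR.
Proof.
  intros HH Hca HcR Hp h Hh.
  unfold V, prodR.
  pose proof (key H ca cR p0 p1 Hca HcR Hp (H + 1 - h) ltac:(lia)) as K.
  replace (H + 1 - (H + 1 - h))%nat with h in K by lia.
  exact K.
Qed.
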